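(* Let $\varphi=\frac{1+\sqrt5}{2}$, $\theta_0=\left(\frac12,\frac1\varphi,\frac1{\varphi^2}\right)$ and $m=(0,\frac12,\frac12)$. Then the language $\mathcal L'_m$ has complexity function $2n+1$ for all $n\ge0$, and the language $\mathcal L_m=\mathcal L_{m,\theta_0}$ has complexity function $2n+3$ for all $n\ge 2$.
   Context: $f_{\theta_0}(m)\in\{a,b,c\}^{\mathbb N}$ records, in order, the successive intersections of the half line $m+\mathbb R_+\theta_0$ with the planes $X=n$ (letter $a$), $Y=n$ (letter $b$), $Z=n$ (letter $c$), $n\in\mathbb Z$; $\mathcal L_m$ is its set of finite factors. The complexity function of a language counts its words of length $n$. The face $X=0$ is identified with $(\mathbb R/\mathbb Z)^2$ via $(y,z)$ and partitioned, up to boundaries, into seven sets, for $(y,z)\in[0,1)^2$: $P_{a_7}$: $y<4-2\varphi,\ z<2\varphi-3$; $P_{a_4}$: $y>4-2\varphi,\ z<2\varphi-3$; $P_{a_2}$: $y<4-2\varphi,\ 2\varphi-3<z<(2-\varphi)+y/\varphi$; $P_{a_1}$: $y<4-2\varphi,\ z>(2-\varphi)+y/\varphi$; $P_{a_5}$: $y>4-2\varphi,\ 2\varphi-3<z<(3-2\varphi)+y/\varphi$; $P_{a_3}$: $y>4-2\varphi,\ (3-2\varphi)+y/\varphi<z<(2-\varphi)+y/\varphi$; $P_{a_6}$: $y>4-2\varphi,\ z>(2-\varphi)+y/\varphi$. $v=v_0v_1v_2\cdots\in\{a_1,\dots,a_7\}^{\mathbb N}$ is defined by $v_k=a_i$ iff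 $m+\frac{2k}{\varphi}(1,-1)\bmod 1\in P_{a_i}$ (the coding of the translation $s\mapsto s+\frac2\varphi\bmod 1$ on the circle through $m$ in direction $(1,-1)$ by the pieces it crosses); one has $f_{\theta_0}(m)=\Phi(v)$ where $\Phi$ is the morphism $\Phi(a_1)=acb$, $\Phi(a_2)=abc$, $\Phi(a_3)=abcb$, $\Phi(a_4)=abb$, $\Phi(a_5)=abbc$, $\Phi(a_6)=acbb$, $\Phi(a_7)=ab$. $\mathcal L'_m$ is the set of finite factors of $v$. *)

(* Defs.v *)
From Stdlib Require Import Reals List.
Open Scope R_scope.

Definition phi : R := (1 + sqrt 5) / 2.

Definition pt3 : Type := (R * R * R)%type.
Definition cX (p : pt3) : R := fst (fst p).
Definition cY (p : pt3) : R := snd (fst p).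
Definition cZ (p : pt3) : R := snd p.

Definition theta0 : pt3 := (1/2, 1/phi, 1/(phi^2)).
Definition m0 : pt3 := (0, 1/2, 1/2).

Definition is_int (x : R) : Prop := exists z : Z, x = IZR z.

(* Alphabet {a,b,c}: a <-> planes X = n, b <-> Y = n, c <-> Z = n. *)
Inductive abc : Type := la | lb | lc.

Definition coord (l : abc) (p : pt3) : R :=
  match l with la => cX p | lb => cY p | lc => cZ p end.

Definition on_ray (m theta : pt3) (t : R) : pt3 :=
  (cX m + t * cX theta, cY m + t * cY theta, cZ m + t * cZ theta).

(* f is the cutting word f_theta(m): tau enumerates, in increasing order,
   the parameters t >= 0 at which the half line m + R_+ theta meets a plane
   X = n, Y = n or Z = n (n integer), and f n records which plane. *)
Definition cutting_word (theta m : pt3) (f : nat -> abc) : Prop :=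
  exists tau : nat -> R,
    0 <= tau 0%nat /\
    (forall n, tau n < tau (S n)) /\
    (forall n, is_int (coord (f n) (on_ray m theta (tau n)))) /\
    (forall (t : R) (l : abc), 0 <= t -> is_int (coord l (on_ray m theta t)) ->
       exists n, tau n = t /\ f n = l).

Inductive a7 : Type := a_1 | a_2 | a_3 | a_4 | a_5 | a_6 | a_7.

(* The seven pieces of the face X = 0, for (y,z) in [0,1)^2 (open pieces,
   boundaries excluded). *)
Definition in_piece (i : a7) (y z : R) : Prop :=
  match i with
  | a_7 => y < 4 - 2*phi /\ z < 2*phi - 3
  | a_4 => y > 4 - 2*phi /\ z < 2*phi - 3
  | a_2 => y < 4 - 2*phi /\ 2*phi - 3 < z /\ z < (2 - phi) + y / phi
  | a_1 => y < 4 - 2*phi /\ z > (2 - phi) + y / phi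
  | a_5 => y > 4 - 2*phi /\ 2*phi - 3 < z /\ z < (3 - 2*phi) + y / phi
  | a_3 => y > 4 - 2*phi /\ (3 - 2*phi) + y / phi < z /\ z < (2 - phi) + y / phi
  | a_6 => y > 4 - 2*phi /\ z > (2 - phi) + y / phi
  end.

(* v is the coding word: v_k = a_i iff m + (2k/phi)(1,-1) mod 1, read in the
   (y,z) coordinates of the face X = 0, lies in P_{a_i}. *)
Definition coding_word (m : pt3) (v : nat -> a7) : Prop :=
  forall (k : nat) (i : a7),
    v k = i <->
    in_piece i (frac_part (cY m + 2 * INR k / phi))
               (frac_part (cZ m - 2 * INR k / phi)).

Definition factor {T : Type} (w : nat -> T) (u : list T) : Prop :=
  exists i : nat, u = map (fun j => w (i + j)%nat) (seq 0 (length u)).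

Definition complexity_is {T : Type} (w : nat -> T) (n k : nat) : Prop :=
  exists s : list (list T),
    NoDup s /\ length s = k /\
    (forall u, In u s <-> (length u = n /\ factor w u)).

(* Main.v *)
Require Import Defs.
From Stdlib Require Import Reals List Lra Lia ZArith FunctionalExtensionality FinFun Classical.
Open Scope R_scope.


Lemma sqrt5_sq : sqrt 5 * sqrt 5 = 5.
Proof. apply sqrt_sqrt; lra. Qed.

Lemma sqrt5_bounds : 2.236 < sqrt 5 < 2.237.
Proof.
  pose proof sqrt5_sq. pose proof (sqrt_pos 5).
  split; nra.
Qed.

Lemma phi_sq : phi * phi = phi + 1.
Proof. unfold phi. pose proof sqrt5_sq. nra. Qed.

Lemma phi_bounds : 1.618 < phi < 1.6185.
Proof. unfold phi. pose proof sqrt5_bounds. lra. Qed.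

Lemma phi_pos : 0 < phi.
Proof. pose proof phi_bounds; lra. Qed.

Lemma inv_phi : 1 / phi = phi - 1.
Proof. pose proof phi_sq. pose proof phi_pos. field_simplify; [|lra]. 
  apply Rmult_eq_reg_r with phi; [|lra]. field_simplify; lra. Qed.

Lemma inv_phi2 : 1 / phi ^ 2 = 2 - phi.
Proof. pose proof phi_sq. pose proof phi_pos.
  apply Rmult_eq_reg_r with (phi^2); [|nra]. field_simplify; [|lra]. simpl. nra. Qed.

Lemma mod5_sq : forall s : Z, (s * s mod 5 = 0 -> s mod 5 = 0)%Z.
Proof.
  intros s H. rewrite Z.mul_mod in H by lia.
  assert (Hr: (0 <= s mod 5 < 5)%Z) by (apply Z.mod_pos_bound; lia).
  destruct (s mod 5)%Z as [|p|p] eqn:E; auto; try lia.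
  assert (Z.pos p = 1 \/ Z.pos p = 2 \/ Z.pos p = 3 \/ Z.pos p = 4)%Z as [h|[h|[h|h]]] by lia;
  rewrite h in H; simpl in H; discriminate.
Qed.

Lemma no_sqrt5_aux : forall n : nat, forall s q : Z, Z.abs_nat q = n -> (s * s = 5 * q * q)%Z -> q = 0%Z.
Proof.
  intro n. induction n as [n IH] using lt_wf_ind. intros s q Hn H.
  destruct (Z.eq_dec q 0) as [|Hq]; auto. exfalso.
  assert (Hs: (s mod 5 = 0)%Z).
  { apply mod5_sq. rewrite H. rewrite <- Z.mul_assoc. rewrite Z.mul_comm. apply Z.mod_mul. lia. }
  apply Z.mod_divide in Hs; [|lia]. destruct Hs as [s1 Hs1]. subst s.
  assert (H2: (q * q = 5 * s1 * s1)%Z) by lia.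
  assert (Hq5: (q mod 5 = 0)%Z).
  { apply mod5_sq. rewrite H2. rewrite <- Z.mul_assoc. rewrite Z.mul_comm. apply Z.mod_mul. lia. }
  apply Z.mod_divide in Hq5; [|lia]. destruct Hq5 as [q1 Hq1]. subst q.
  assert (H3: (s1 * s1 = 5 * q1 * q1)%Z) by lia.
  assert (q1 <> 0)%Z by lia.
  assert (Z.abs_nat q1 < n)%nat by (subst n; zify; lia).
  apply H0. apply (IH _ H1 s1 q1 eq_refl H3).
Qed.

Lemma phi_irr : forall p q : Z, IZR p + IZR q * phi = 0 -> p = 0%Z /\ q = 0%Z.
Proof.
  intros p q H. unfold phi in H.
  assert (H1 : IZR q * sqrt 5 = - IZR (2*p + q)).
  { rewrite plus_IZR, mult_IZR. simpl. lra. }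
  assert (H2 : IZR ((2*p+q)*(2*p+q)) = IZR (5*q*q)).
  { rewrite !mult_IZR. replace (IZR (2*p+q)) with (- (IZR q * sqrt 5)) by lra.
    pose proof sqrt5_sq. simpl. nra. }
  apply eq_IZR in H2. apply no_sqrt5_aux with (n := Z.abs_nat q) in H2; auto.
  subst q. simpl in H1. split; auto. rewrite plus_IZR in H1. simpl in H1.
  assert (IZR p = 0) by lra. apply eq_IZR. auto.
Qed.

Lemma frac_range : forall r, 0 <= frac_part r < 1.
Proof. intros r. pose proof (base_fp r). lra. Qed.

Lemma frac_decomp : forall r, r = IZR (Int_part r) + frac_part r.
Proof. intros. unfold frac_part. ring. Qed.

Lemma frac_unique : forall r y z, 0 <= y < 1 -> r = IZR z + y -> frac_part r = y.
Proof.
  intros r y z Hy Hr. pose proof (base_Int_part r) as [H1 H2].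
  assert (Int_part r = z).
  { assert (IZR (Int_part r) < IZR z + 1) by lra.
    assert (IZR z < IZR (Int_part r) + 1) by lra.
    rewrite <- plus_IZR in *. apply lt_IZR in H. apply lt_IZR in H0. lia. }
  unfold frac_part. rewrite H. lra.
Qed.

Lemma frac_eq : forall a b, frac_part a = frac_part b -> exists z, a - b = IZR z.
Proof.
  intros a b H. exists (Int_part a - Int_part b)%Z. rewrite minus_IZR.
  rewrite (frac_decomp a), (frac_decomp b) at 1. lra.
Qed.

Lemma frac_shift : forall r z, frac_part (r + IZR z) = frac_part r.
Proof.
  intros. apply frac_unique with (Int_part r + z)%Z. apply frac_range.
  rewrite plus_IZR. rewrite (frac_decomp r) at 1. ring.
Qed.


Definition al : R := 2*phi - 3.
Definition be : R := 2 - phi.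
Definition xs (k : nat) : R := frac_part (1/2 + INR k * al).
Definition step (y : R) : R := if Rlt_dec y (2*be) then y + al else y + al - 1.
Definition Cv (y : R) : a7 := if Rlt_dec y be then a_1 else if Rlt_dec y (2*be) then a_2 else a_4.
Definition dP1 (j : nat) : R := frac_part (be - INR j * al).
Definition dP2 (j : nat) : R := frac_part (2*be - INR j * al).
Definition dv (i : nat) : R := if Nat.even i then dP1 (Nat.div2 i) else dP2 (Nat.div2 i).

Lemma al_bounds : 0.236 < al < 0.237.
Proof. unfold al. pose proof phi_bounds. lra. Qed.
Lemma be_bounds : 0.3815 < be < 0.382.
Proof. unfold be. pose proof phi_bounds. lra. Qed.
Lemma al_be : al + 2*be = 1.
Proof. unfold al, be. lra. Qed.

Ltac irr_solve p q :=
  let E := fresh in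
  assert (E : IZR (p) + IZR (q) * phi = 0)
    by (unfold al, be in *; rewrite ?INR_IZR_INZ in *;
        repeat rewrite ?plus_IZR, ?mult_IZR, ?minus_IZR, ?opp_IZR in *; lra);
  apply phi_irr in E; lia.

Lemma frac_id : forall y, 0 <= y < 1 -> frac_part y = y.
Proof. intros. apply frac_unique with 0%Z; auto. simpl; lra. Qed.

Lemma xs_range : forall k, 0 < xs k < 1.
Proof.
  intros k. pose proof (frac_range (1/2 + INR k * al)). fold (xs k) in H.
  split; [|lra]. destruct (Req_dec (xs k) 0) as [E|E]; [|lra]. exfalso.
  assert (frac_part (1/2 + INR k * al) = frac_part 0) by (fold (xs k); rewrite E; symmetry; apply frac_id; lra).
  apply frac_eq in H0. destruct H0 as [z Hz].
  irr_solve (1 - 6 * Z.of_nat k - 2*z)%Z (4 * Z.of_nat k)%Z.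
Qed.


Lemma xs_S : forall k, xs (S k) = step (xs k).
Proof.
  intros k. unfold xs. rewrite S_INR.
  set (r := 1/2 + INR k * al).
  pose proof (frac_decomp r). pose proof (frac_range r). pose proof al_bounds. pose proof al_be.
  unfold step. destruct (Rlt_dec (frac_part r) (2*be)).
  - apply frac_unique with (Int_part r). lra. unfold r in *. lra.
  - apply frac_unique with (Int_part r + 1)%Z. lra. rewrite plus_IZR. unfold r in *. lra.
Qed.

Lemma dP1_range : forall j, 0 < dP1 j < 1.
Proof.
  intros j. pose proof (frac_range (be - INR j * al)). fold (dP1 j) in H.
  split; [|lra]. destruct (Req_dec (dP1 j) 0) as [E|E]; [|lra]. exfalso.
  assert (frac_part (be - INR j * al) = frac_part 0) by (fold (dP1 j); rewrite E; symmetry; apply frac_id; lra).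
  apply frac_eq in H0. destruct H0 as [z Hz].
  irr_solve (2 + 3 * Z.of_nat j - z)%Z (-1 - 2 * Z.of_nat j)%Z.
Qed.

Lemma dP2_range : forall j, 0 < dP2 j < 1.
Proof.
  intros j. pose proof (frac_range (2*be - INR j * al)). fold (dP2 j) in H.
  split; [|lra]. destruct (Req_dec (dP2 j) 0) as [E|E]; [|lra]. exfalso.
  assert (frac_part (2*be - INR j * al) = frac_part 0) by (fold (dP2 j); rewrite E; symmetry; apply frac_id; lra).
  apply frac_eq in H0. destruct H0 as [z Hz].
  irr_solve (4 + 3 * Z.of_nat j - z)%Z (-2 - 2 * Z.of_nat j)%Z.
Qed.

Lemma dv_range : forall i, 0 < dv i < 1.
Proof. intros. unfold dv. destruct (Nat.even i); [apply dP1_range|apply dP2_range]. Qed.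

Lemma xs_dP1 : forall k j, xs k <> dP1 j.
Proof.
  intros k j E. apply frac_eq in E. destruct E as [z Hz].
  irr_solve (1 - 6 * Z.of_nat k - 6 * Z.of_nat j - 4 - 2*z)%Z (4 * Z.of_nat k + 4 * Z.of_nat j + 2)%Z.
Qed.

Lemma xs_dP2 : forall k j, xs k <> dP2 j.
Proof.
  intros k j E. apply frac_eq in E. destruct E as [z Hz].
  irr_solve (1 - 6 * Z.of_nat k - 6 * Z.of_nat j - 8 - 2*z)%Z (4 * Z.of_nat k + 4 * Z.of_nat j + 4)%Z.
Qed.

Lemma xs_dv : forall k i, xs k <> dv i.
Proof. intros. unfold dv. destruct (Nat.even i); [apply xs_dP1|apply xs_dP2]. Qed.

Lemma al_frac : frac_part al = al.
Proof. apply frac_id. pose proof al_bounds; lra. Qed.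
Lemma albe_frac : frac_part (al + be) = al + be.
Proof. apply frac_id. pose proof al_bounds; pose proof be_bounds; lra. Qed.

Lemma xs_al : forall k, xs k <> al.
Proof.
  intros k E. rewrite <- al_frac in E. apply frac_eq in E. destruct E as [z Hz].
  irr_solve (1 - 6 * Z.of_nat k + 6 - 2*z)%Z (4 * Z.of_nat k - 4)%Z.
Qed.

Lemma xs_albe : forall k, xs k <> al + be.
Proof.
  intros k E. rewrite <- albe_frac in E. apply frac_eq in E. destruct E as [z Hz].
  irr_solve (1 - 6 * Z.of_nat k + 2 - 2*z)%Z (4 * Z.of_nat k - 2)%Z.
Qed.

Lemma dP1_0 : dP1 0 = be.
Proof. unfold dP1. simpl. replace (be - 0 * al) with be by ring. apply frac_id. pose proof be_bounds; lra. Qed.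
Lemma dP2_0 : dP2 0 = 2*be.
Proof. unfold dP2. simpl. replace (2*be - 0 * al) with (2*be) by ring. apply frac_id. pose proof be_bounds; lra. Qed.

Lemma xs_be : forall k, xs k <> be.
Proof. intros k. rewrite <- dP1_0. apply xs_dP1. Qed.
Lemma xs_2be : forall k, xs k <> 2*be.
Proof. intros k. rewrite <- dP2_0. apply xs_dP2. Qed.

Lemma dv_inj : forall i i', dv i = dv i' -> i = i'.
Proof.
  intros i i' E. pose proof (Nat.div2_odd i) as Hi. pose proof (Nat.div2_odd i') as Hi'.
  rewrite <- Nat.negb_even in Hi, Hi'.
  unfold dv in E. destruct (Nat.even i), (Nat.even i'); simpl in Hi, Hi'; apply frac_eq in E; destruct E as [z Hz].
  - set (a := Nat.div2 i) in *. set (b := Nat.div2 i') in *.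
    irr_solve (3 * Z.of_nat a - 3 * Z.of_nat b - z)%Z (2 * Z.of_nat b - 2 * Z.of_nat a)%Z.
  - set (a := Nat.div2 i) in *. set (b := Nat.div2 i') in *.
    irr_solve (3 * Z.of_nat a - 3 * Z.of_nat b - 2 - z)%Z (2 * Z.of_nat b - 2 * Z.of_nat a + 1)%Z.
  - set (a := Nat.div2 i) in *. set (b := Nat.div2 i') in *.
    irr_solve (3 * Z.of_nat a - 3 * Z.of_nat b + 2 - z)%Z (2 * Z.of_nat b - 2 * Z.of_nat a - 1)%Z.
  - set (a := Nat.div2 i) in *. set (b := Nat.div2 i') in *.
    irr_solve (3 * Z.of_nat a - 3 * Z.of_nat b - z)%Z (2 * Z.of_nat b - 2 * Z.of_nat a)%Z.
Qed.

Lemma al_dv : forall i, al <> dv i.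
Proof.
  intros i E. rewrite <- al_frac in E. unfold dv in E.
  destruct (Nat.even i); apply frac_eq in E; destruct E as [z Hz]; set (a := Nat.div2 i) in *.
  - irr_solve (-3 - 3 * Z.of_nat a - 2 - z)%Z (2 + 2 * Z.of_nat a + 1)%Z.
  - irr_solve (-3 - 3 * Z.of_nat a - 4 - z)%Z (2 + 2 * Z.of_nat a + 2)%Z.
Qed.

Lemma albe_dv : forall i, al + be <> dv i.
Proof.
  intros i E. rewrite <- albe_frac in E. unfold dv in E.
  destruct (Nat.even i); apply frac_eq in E; destruct E as [z Hz]; set (a := Nat.div2 i) in *.
  - irr_solve (-1 - 3 * Z.of_nat a - 2 - z)%Z (2 + 2 * Z.of_nat a)%Z.
  - irr_solve (-1 - 3 * Z.of_nat a - 4 - z)%Z (3 + 2 * Z.of_nat a)%Z.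
Qed.


Definition ltb (d y : R) : bool := if Rlt_dec d y then true else false.
Definition cnt (D : list R) (y : R) : nat := length (filter (fun d => ltb d y) D).
Definition betw (y y' d : R) : Prop := (y < d < y') \/ (y' < d < y).

Lemma cnt_cons : forall d D y, cnt (d :: D) y = ((if Rlt_dec d y then 1 else 0) + cnt D y)%nat.
Proof. intros. unfold cnt, ltb. simpl. destruct (Rlt_dec d y); reflexivity. Qed.

Lemma cnt_app : forall D1 D2 y, cnt (D1 ++ D2) y = (cnt D1 y + cnt D2 y)%nat.
Proof. intros. unfold cnt. rewrite filter_app, length_app. reflexivity. Qed.

Lemma cnt_le : forall D y, (cnt D y <= length D)%nat.
Proof. intros. unfold cnt. apply filter_length_le. Qed.

Lemma cnt_mono : forall D y y', y <= y' -> (cnt D y <= cnt D y')%nat.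
Proof.
  induction D as [|d D IH]; intros y y' H. unfold cnt; simpl; lia.
  rewrite !cnt_cons. specialize (IH y y' H).
  destruct (Rlt_dec d y), (Rlt_dec d y'); try lia. lra.
Qed.

Lemma cnt_strict : forall D y y', y <= y' -> (exists d, In d D /\ y < d < y') -> (cnt D y < cnt D y')%nat.
Proof.
  induction D as [|d D IH]; intros y y' H [e [He1 He2]]. destruct He1.
  rewrite !cnt_cons. destruct He1 as [<-|He1].
  - pose proof (cnt_mono D y y' H). destruct (Rlt_dec d y), (Rlt_dec d y'); try lra; lia.
  - assert (cnt D y < cnt D y')%nat by (apply IH; eauto).
    destruct (Rlt_dec d y), (Rlt_dec d y'); try lia. lra.
Qed.

Lemma cnt_eq : forall D y y', y <= y' -> (forall d, In d D -> d <> y /\ ~ (y < d < y')) -> cnt D y = cnt D y'.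
Proof.
  induction D as [|d D IH]; intros y y' H Hd. reflexivity.
  rewrite !cnt_cons. rewrite (IH y y'); [|auto|intros; apply Hd; simpl; auto].
  destruct (Hd d (or_introl eq_refl)) as [H1 H2].
  destruct (Rlt_dec d y), (Rlt_dec d y'); try lia; exfalso.
  lra. apply H2. lra.
Qed.

Lemma cell_iii : forall D y y', (forall d, In d D -> d <> y /\ d <> y') ->
  (cnt D y = cnt D y' <-> forall d, In d D -> ~ betw y y' d).
Proof.
  intros D y y' Hn. split.
  - intros Heq d Hd [Hb|Hb].
    + assert (cnt D y < cnt D y')%nat by (apply cnt_strict; [lra| eauto]). lia.
    + assert (cnt D y' < cnt D y)%nat by (apply cnt_strict; [lra| eauto]). lia.
  - intros Hb. destruct (Rle_dec y y').
    + apply cnt_eq; auto. intros d Hd. split. apply Hn; auto. intro. apply (Hb d Hd). left; auto.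
    + symmetry. apply cnt_eq. lra. intros d Hd. split. apply Hn; auto. intro. apply (Hb d Hd). right; auto.
Qed.

Lemma cnt_zero : forall D y, (forall d, In d D -> ~ d < y) -> cnt D y = 0%nat.
Proof.
  induction D as [|d D IH]; intros y H. reflexivity.
  rewrite cnt_cons. rewrite IH by (intros; apply H; simpl; auto).
  destruct (Rlt_dec d y); auto. exfalso. apply (H d); simpl; auto.
Qed.

Lemma list_min : forall D : list R, D <> nil -> exists d0, In d0 D /\ forall d, In d D -> d0 <= d.
Proof.
  induction D as [|d D IH]; intros H. congruence.
  destruct D as [|e D'].
  - exists d. split. simpl; auto. intros x [<-|[]]. lra.
  - destruct IH as [m [Hm1 Hm2]]. congruence.
    destruct (Rle_dec d m).
    + exists d. split. simpl; auto. intros x [<-|Hx]. lra. specialize (Hm2 x Hx). lra.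
    + exists m. split. simpl; auto. intros x [<-|Hx]. lra. auto.
Qed.

Lemma cell_ii : forall n (D : list R) lo hi, length D = n -> NoDup D -> (forall d, In d D -> lo < d < hi) -> lo < hi ->
  forall m, (m <= n)%nat -> exists a b, lo <= a < b /\ b <= hi /\ forall y, a < y < b -> cnt D y = m.
Proof.
  induction n as [|n IH]; intros D lo hi Hl Hnd Hin Hlh m Hm.
  - destruct D; [|discriminate]. exists lo, hi. split. lra. split. lra. intros. assert (m = 0)%nat by lia. subst. reflexivity.
  - destruct (list_min D) as [d0 [Hd0 Hmin]]. intro; subst; discriminate.
    destruct (in_split _ _ Hd0) as [l1 [l2 E]]. subst D.
    pose proof (NoDup_remove_1 _ _ _ Hnd) as Hnd'. pose proof (NoDup_remove_2 _ _ _ Hnd) as Hni.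
    assert (Hgt : forall d, In d (l1 ++ l2) -> d0 < d < hi).
    { intros d Hd. assert (d <> d0) by (intro; subst; auto).
      assert (In d (l1 ++ d0 :: l2)) by (apply in_app_or in Hd; apply in_or_app; simpl; tauto).
      specialize (Hmin d H0). specialize (Hin d H0). split; [lra|tauto]. }
    assert (Hd0r := Hin d0 Hd0).
    destruct m as [|m].
    + exists lo, d0. split. lra. split. lra. intros y Hy.
      apply cnt_zero. intros x Hx. specialize (Hmin x Hx). lra.
    + rewrite length_app in Hl. simpl in Hl.
      destruct (IH (l1 ++ l2) d0 hi) with (m := m) as [a [b [H1 [H2 H3]]]]; auto.
      rewrite length_app; lia. lra. lia.
      exists a, b. split. lra. split. lra. intros y Hy.
      specialize (H3 y Hy). rewrite cnt_app in *. rewrite cnt_cons.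
      destruct (Rlt_dec d0 y); [|lra]. lia.
Qed.

Lemma witnesses : forall (key : nat -> nat) N, (forall m, (m < N)%nat -> exists i, key i = m) ->
  exists l : list nat, length l = N /\ forall m, (m < N)%nat -> key (nth m l 0%nat) = m.
Proof.
  intros key N. induction N as [|N IH]; intros Hs.
  - exists nil. split; auto. intros; lia.
  - destruct IH as [l [Hl Hk]]. intros; apply Hs; lia.
    destruct (Hs N) as [i Hi]. lia.
    exists (l ++ i :: nil). split. rewrite length_app; simpl; lia.
    intros m Hm. destruct (Nat.lt_ge_cases m N).
    + rewrite app_nth1 by lia. auto.
    + assert (m = N) by lia. subst m. rewrite app_nth2 by lia. rewrite Hl, Nat.sub_diag. simpl. auto.
Qed.

Definition wrd {T} (w : nat -> T) (i n : nat) : list T := map (fun j => w (i + j)%nat) (seq 0 n).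

Lemma wrd_eq : forall {T} (w : nat -> T) i i' n,
  wrd w i n = wrd w i' n <-> (forall p, (p < n)%nat -> w (i + p)%nat = w (i' + p)%nat).
Proof.
  intros T w i i' n. unfold wrd. split.
  - intros H p Hp. assert (Hp' : In p (seq 0 n)) by (apply in_seq; lia).
    assert (nth p (map (fun j => w (i + j)%nat) (seq 0 n)) (w 0%nat) = nth p (map (fun j => w (i' + j)%nat) (seq 0 n)) (w 0%nat)) by (rewrite H; auto).
    rewrite !nth_indep with (d := w 0%nat) (d' := w (i+0)%nat) in H0 by (rewrite length_map, length_seq; lia).
    rewrite map_nth with (d := 0%nat) in H0.
    rewrite nth_indep with (d := w (i+0)%nat) (d' := w (i'+0)%nat) in H0 by (rewrite length_map, length_seq; lia).
    rewrite map_nth with (d := 0%nat) in H0.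
    rewrite seq_nth in H0 by lia. simpl in H0. auto.
  - intros H. apply map_ext_in. intros a Ha. apply in_seq in Ha. apply H. lia.
Qed.

Lemma complexity_of_key : forall {T} (w : nat -> T) n N (key : nat -> nat),
  (forall i, (key i < N)%nat) -> (forall m, (m < N)%nat -> exists i, key i = m) ->
  (forall i i', (forall p, (p < n)%nat -> w (i + p)%nat = w (i' + p)%nat) <-> key i = key i') ->
  complexity_is w n N.
Proof.
  intros T w n N key Hlt Hs Heq.
  destruct (witnesses key N Hs) as [l [Hl Hk]].
  exists (map (fun i => wrd w i n) l). split; [|split].
  - apply (NoDup_nth _ nil). intros a b Ha Hb E. rewrite length_map in Ha, Hb.
    assert (HN : forall x, (x < length l)%nat -> nth x (map (fun i => wrd w i n) l) nil = wrd w (nth x l 0%nat) n).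
    { intros x Hx. rewrite nth_indep with (d' := wrd w 0%nat n). exact (map_nth (fun i => wrd w i n) l 0%nat x). rewrite length_map; auto. }
    rewrite !HN in E by auto.
    rewrite wrd_eq in E. apply Heq in E. rewrite !Hk in E by lia. auto.
  - rewrite length_map. auto.
  - intros u. split.
    + intros Hu. apply in_map_iff in Hu. destruct Hu as [i [<- _]]. split.
      unfold wrd. rewrite length_map, length_seq. auto.
      exists i. unfold wrd. rewrite length_map, length_seq. auto.
    + intros [Hlen [i Hi]]. rewrite Hlen in Hi. fold (wrd w i n) in Hi.
      apply in_map_iff. exists (nth (key i) l 0%nat). split.
      * rewrite Hi. rewrite wrd_eq. apply Heq. rewrite Hk; auto.
      * apply nth_In. rewrite Hl. auto.
Qed.


Lemma pigeonhole : forall N (g : nat -> nat), (forall i, (i <= N)%nat -> (g i < N)%nat) ->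
  exists i j, (i < j <= N)%nat /\ g i = g j.
Proof.
  induction N as [|N IH]; intros g Hg.
  - specialize (Hg 0%nat (le_n 0)). lia.
  - destruct (classic (exists i, (i <= N)%nat /\ g i = g (S N))) as [[i [Hi E]]|Hno].
    + exists i, (S N). split. lia. auto.
    + set (h := fun i => if Nat.eq_dec (g i) N then g (S N) else g i).
      destruct (IH h) as [i [j [Hij E]]].
      { intros i Hi. unfold h. assert (g i <> g (S N)) by (intro; apply Hno; eauto).
        assert (g i < S N)%nat by (apply Hg; lia). assert (g (S N) < S N)%nat by (apply Hg; lia).
        destruct (Nat.eq_dec (g i) N); lia. }
      unfold h in E.
      assert (g i <> g (S N)) by (intro; apply Hno; exists i; split; [lia|auto]).
      assert (g j <> g (S N)) by (intro; apply Hno; exists j; split; [lia|auto]).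
      exists i, j. split. lia.
      destruct (Nat.eq_dec (g i) N), (Nat.eq_dec (g j) N); try lia.
Qed.

Lemma al_irr : forall (m : nat) (z : Z), (m >= 1)%nat -> INR m * al <> IZR z.
Proof.
  intros m z Hm E. irr_solve (- 3 * Z.of_nat m - z)%Z (2 * Z.of_nat m)%Z.
Qed.

Lemma INR_Zto : forall z, (0 <= z)%Z -> INR (Z.to_nat z) = IZR z.
Proof. intros. rewrite INR_IZR_INZ. rewrite Z2Nat.id; auto. Qed.

Lemma Int_part_ge0 : forall r, 0 <= r -> (0 <= Int_part r)%Z.
Proof.
  intros r Hr. pose proof (base_Int_part r) as [H1 H2].
  assert (IZR (-1) < IZR (Int_part r)) by lra. apply lt_IZR in H. lia.
Qed.

Lemma Int_part_lt : forall r (N : nat), r < INR N -> (Int_part r < Z.of_nat N)%Z.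
Proof.
  intros r N Hr. pose proof (base_Int_part r) as [H1 H2]. rewrite INR_IZR_INZ in Hr.
  assert (IZR (Int_part r) < IZR (Z.of_nat N)) by lra. apply lt_IZR in H. auto.
Qed.

Lemma up_mult : forall c d, 0 < d -> 0 <= c -> exists t : nat, c < INR t * d <= c + d.
Proof.
  intros c d Hd Hc. set (r := c / d). pose proof (archimed r) as [H1 H2].
  assert (Hr : 0 <= r) by (unfold r; apply Rmult_le_pos; [lra| left; apply Rinv_0_lt_compat; lra]).
  assert (HU : (0 <= up r)%Z) by (assert (IZR (-1) < IZR (up r)) by lra; apply lt_IZR in H; lia).
  exists (Z.to_nat (up r)). rewrite INR_Zto by auto.
  assert (Hrd : r * d = c) by (unfold r; field; lra).
  split; nra.
Qed.

Lemma density : forall x0 a b, 0 <= a -> a < b -> b <= 1 ->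
  exists k : nat, a < frac_part (x0 + INR k * al) < b.
Proof.
  intros x0 a b Ha Hab Hb.
  set (eps := b - a). assert (Heps : 0 < eps) by (unfold eps; lra).
  destruct (up_mult 1 eps Heps) as [N [HN _]]. lra.
  assert (HNpos : 0 < INR N) by (pose proof (pos_INR N); nra).
  set (p := fun i : nat => frac_part (INR i * al)).
  set (g := fun i : nat => Z.to_nat (Int_part (INR N * p i))).
  destruct (pigeonhole N g) as [i [j [Hij Eg]]].
  { intros i _. unfold g. pose proof (frac_range (INR i * al)). fold (p i) in H.
    assert (INR N * p i < INR N) by nra.
    apply Int_part_lt in H0. pose proof (Int_part_ge0 (INR N * p i)). 
    assert (0 <= INR N * p i) by nra. specialize (H1 H2). lia. }
  unfold g in Eg.
  pose proof (Int_part_ge0 (INR N * p i)) as Gi. pose proof (Int_part_ge0 (INR N * p j)) as Gj.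
  pose proof (frac_range (INR i * al)) as Ri. pose proof (frac_range (INR j * al)) as Rj. fold (p i) in Ri. fold (p j) in Rj.
  assert (Eg' : Int_part (INR N * p i) = Int_part (INR N * p j)).
  { specialize (Gi ltac:(nra)). specialize (Gj ltac:(nra)). apply Z2Nat.inj; auto. }
  pose proof (base_Int_part (INR N * p i)) as [Bi1 Bi2]. pose proof (base_Int_part (INR N * p j)) as [Bj1 Bj2].
  rewrite Eg' in Bi1, Bi2.
  set (delta := p j - p i).
  assert (Hd1 : INR N * delta < 1) by (unfold delta; lra).
  assert (Hd2 : - 1 < INR N * delta) by (unfold delta; lra).
  assert (Hdl : delta < eps) by nra.
  assert (Hdl' : - eps < delta) by nra.
  set (Ji := Int_part (INR i * al)). set (Jj := Int_part (INR j * al)).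
  assert (Ei : INR i * al = IZR Ji + p i) by apply frac_decomp.
  assert (Ej : INR j * al = IZR Jj + p j) by apply frac_decomp.
  set (m := (j - i)%nat).
  assert (Hmi : INR m = INR j - INR i) by (unfold m; apply minus_INR; lia).
  assert (Hdz : delta <> 0).
  { intro E. apply (al_irr m (Jj - Ji)). unfold m; lia. rewrite Hmi, minus_IZR.
    unfold delta in E. lra. }
  set (I0 := Int_part x0). set (u0 := frac_part x0).
  assert (E0 : x0 = IZR I0 + u0) by apply frac_decomp.
  pose proof (frac_range x0) as R0. fold u0 in R0.
  assert (Key : forall t : nat, x0 + INR (t * m) * al = IZR (I0 + Z.of_nat t * (Jj - Ji)) + (u0 + INR t * delta)).
  { intros t. rewrite mult_INR, Hmi. rewrite plus_IZR, mult_IZR, minus_IZR, <- INR_IZR_INZ.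
    replace (INR t * (INR j - INR i) * al) with (INR t * (INR j * al) - INR t * (INR i * al)) by ring.
    rewrite Ei, Ej. unfold delta. rewrite E0. ring. }
  unfold eps in *. destruct (Rlt_dec 0 delta) as [Hpos|Hneg].
  - destruct (up_mult (a + 1 - u0) delta Hpos) as [t [Ht1 Ht2]]. lra.
    exists (t * m)%nat. rewrite (frac_unique _ (u0 + INR t * delta - 1) (I0 + Z.of_nat t * (Jj - Ji) + 1)).
    lra. lra. rewrite Key. repeat rewrite ?plus_IZR, ?minus_IZR. ring.
  - assert (Hneg' : 0 < - delta) by lra.
    destruct (up_mult (u0 - b + 1) (- delta) Hneg') as [t [Ht1 Ht2]]. lra.
    exists (t * m)%nat. rewrite (frac_unique _ (u0 + INR t * delta + 1) (I0 + Z.of_nat t * (Jj - Ji) - 1)).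
    lra. lra. rewrite Key. repeat rewrite ?plus_IZR, ?minus_IZR. ring.
Qed.


Lemma Cv_a1 : forall y, Cv y = a_1 <-> y < be.
Proof. intros. unfold Cv. destruct (Rlt_dec y be); [tauto|]. destruct (Rlt_dec y (2*be)); split; intro; try discriminate; lra. Qed.
Lemma Cv_a4 : forall y, Cv y = a_4 <-> ~ y < 2*be.
Proof. intros. pose proof be_bounds. unfold Cv. destruct (Rlt_dec y be); [split; intro; try discriminate; lra|].
  destruct (Rlt_dec y (2*be)); split; intro; try discriminate; try lra; auto. Qed.

Definition CE (k k' j : nat) : Prop := forall i, (i < j)%nat -> Cv (xs (k+i)) = Cv (xs (k'+i)).

Lemma wrap : forall k k' j, CE k k' j -> exists N : Z,
  xs (k+j) = xs k + INR j * al - IZR N /\ xs (k'+j) = xs k' + INR j * al - IZR N.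
Proof.
  intros k k' j. induction j as [|j IH]; intros H.
  - exists 0%Z. rewrite !Nat.add_0_r. simpl. split; ring.
  - destruct IH as [N [H1 H2]]. intros i Hi; apply H; lia.
    assert (Hc : Cv (xs (k+j)) = Cv (xs (k'+j))) by (apply H; lia).
    rewrite !Nat.add_succ_r, !xs_S. unfold step. rewrite S_INR.
    destruct (Rlt_dec (xs (k+j)) (2*be)) as [h|h], (Rlt_dec (xs (k'+j)) (2*be)) as [h'|h'].
    + exists N. lra.
    + exfalso. apply Cv_a4 in h'. rewrite <- Hc in h'. apply Cv_a4 in h'. auto.
    + exfalso. apply Cv_a4 in h. rewrite Hc in h. apply Cv_a4 in h. auto.
    + exists (N+1)%Z. rewrite plus_IZR. lra.
Qed.

Lemma crossing : forall k k' j c, CE k k' j -> 0 < c < 1 ->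
  betw (xs k) (xs k') (frac_part (c - INR j * al)) -> betw (xs (k+j)) (xs (k'+j)) c.
Proof.
  intros k k' j c H Hc Hb. destruct (wrap k k' j H) as [N [H1 H2]].
  pose proof (frac_decomp (c - INR j * al)) as Ed.
  set (d := frac_part (c - INR j * al)) in *. set (M := (Int_part (c - INR j * al) + N)%Z).
  assert (Hv : d + INR j * al - IZR N = c - IZR M) by (unfold M; rewrite plus_IZR; lra).
  pose proof (xs_range (k+j)). pose proof (xs_range (k'+j)).
  assert (HM : M = 0%Z).
  { assert (0 < c - IZR M < 1) by (destruct Hb; lra).
    assert (Q1 : IZR (-1) < IZR M) by (simpl; lra). assert (Q2 : IZR M < IZR 1) by (simpl; lra).
    apply lt_IZR in Q1. apply lt_IZR in Q2. lia. }
  rewrite HM in Hv. simpl in Hv. unfold betw in *. lra.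
Qed.

Lemma uncrossing : forall k k' j c, CE k k' j -> 0 < c < 1 ->
  betw (xs (k+j)) (xs (k'+j)) c -> betw (xs k) (xs k') (frac_part (c - INR j * al)).
Proof.
  intros k k' j c H Hc Hb. destruct (wrap k k' j H) as [N [H1 H2]].
  pose proof (xs_range k). pose proof (xs_range k').
  rewrite (frac_unique _ (c - INR j * al + IZR N) (- N)).
  - unfold betw in *. lra.
  - unfold betw in *. lra.
  - rewrite opp_IZR. ring.
Qed.

Lemma dv_even : forall j, dv (2*j) = dP1 j.
Proof. intros. unfold dv. rewrite Nat.even_mul, Nat.div2_double. reflexivity. Qed.
Lemma dv_odd : forall j, dv (S (2*j)) = dP2 j.
Proof. intros. unfold dv. rewrite Nat.even_succ, Nat.odd_mul, Nat.div2_succ_double. reflexivity. Qed.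

Lemma in_Dl : forall d L, In d (map dv (seq 0 L)) <-> exists i, (i < L)%nat /\ d = dv i.
Proof.
  intros. rewrite in_map_iff. split.
  - intros [i [<- Hi]]. apply in_seq in Hi. exists i. split; [lia|auto].
  - intros [i [Hi ->]]. exists i. split; auto. apply in_seq. lia.
Qed.

Lemma dv_cases : forall i, (exists j, i = 2*j /\ dv i = dP1 j)%nat \/ (exists j, i = S (2*j) /\ dv i = dP2 j)%nat.
Proof.
  intros i. pose proof (Nat.div2_odd i). destruct (Nat.odd i) eqn:E; cbn [Nat.b2n] in H.
  - right. exists (Nat.div2 i). split. lia. rewrite H at 1. replace (2 * Nat.div2 i + 1)%nat with (S (2 * Nat.div2 i)) by lia. apply dv_odd.
  - left. exists (Nat.div2 i). split. lia. rewrite H at 1. rewrite Nat.add_0_r. apply dv_even.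
Qed.

Definition b2 (e : bool) : nat := if e then 1%nat else 0%nat.

Lemma core : forall k k' q (e : bool),
  ((forall i, (i < q)%nat -> Cv (xs (k+i)) = Cv (xs (k'+i))) /\
   (e = true -> (xs (k+q) < be <-> xs (k'+q) < be)))
  <-> (forall d, In d (map dv (seq 0 (2*q + b2 e))) -> ~ betw (xs k) (xs k') d).
Proof.
  intros k k' q e. pose proof be_bounds as Hbe. split.
  - intros [HC He] d Hd Hb. apply in_Dl in Hd. destruct Hd as [i [Hi ->]].
    destruct (dv_cases i) as [[j [-> Ej]]|[j [-> Ej]]]; rewrite Ej in Hb.
    + assert (Hj : (j < q)%nat \/ (j = q /\ e = true)) by (destruct e; simpl in Hi; lia).
      apply crossing with (j := j) in Hb.
      2:{ intros i Hi'; apply HC; lia. }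
      2: lra.
      destruct Hj as [Hj|[-> He']].
      * specialize (HC j Hj). unfold betw in Hb.
        destruct Hb as [Hb|Hb]; [ assert (Cv (xs (k+j)) = a_1) by (apply Cv_a1; lra);
           assert (Cv (xs (k'+j)) <> a_1) by (rewrite Cv_a1; lra)
         | assert (Cv (xs (k'+j)) = a_1) by (apply Cv_a1; lra);
           assert (Cv (xs (k+j)) <> a_1) by (rewrite Cv_a1; lra)]; congruence.
      * specialize (He He'). unfold betw in Hb. lra.
    + assert (Hj : (j < q)%nat) by (destruct e; simpl in Hi; lia).
      apply crossing with (j := j) in Hb.
      2:{ intros i Hi'; apply HC; lia. }
      2: lra.
      specialize (HC j Hj). unfold betw in Hb.
      destruct Hb as [Hb|Hb]; [ assert (Cv (xs (k'+j)) = a_4) by (apply Cv_a4; lra);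
           assert (Cv (xs (k+j)) <> a_4) by (rewrite Cv_a4; lra)
         | assert (Cv (xs (k+j)) = a_4) by (apply Cv_a4; lra);
           assert (Cv (xs (k'+j)) <> a_4) by (rewrite Cv_a4; lra)]; congruence.
  - intros Hn.
    assert (HCE : forall j, (j <= q)%nat -> CE k k' j).
    { induction j as [|j IH]; intros Hj i Hi. lia.
      destruct (Nat.lt_ge_cases i j) as [Hij|Hij]. apply IH; lia.
      assert (i = j) by lia. subst i.
      pose proof (xs_be (k+j)). pose proof (xs_be (k'+j)). pose proof (xs_2be (k+j)). pose proof (xs_2be (k'+j)).
      destruct (Cv (xs (k + j))) eqn:E1, (Cv (xs (k' + j))) eqn:E2; auto; exfalso;
      unfold Cv in E1, E2;
      destruct (Rlt_dec (xs (k+j)) be); try discriminate; destruct (Rlt_dec (xs (k+j)) (2*be)); try discriminate;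
      destruct (Rlt_dec (xs (k'+j)) be); try discriminate; destruct (Rlt_dec (xs (k'+j)) (2*be)); try discriminate.
      all: first
        [ assert (Hb : betw (xs (k+j)) (xs (k'+j)) be) by (unfold betw; lra);
          apply uncrossing in Hb; [|apply IH; lia|lra];
          apply (Hn (dP1 j)); [apply in_Dl; exists (2*j)%nat; split; [lia|symmetry; apply dv_even] | exact Hb]
        | assert (Hb : betw (xs (k+j)) (xs (k'+j)) (2*be)) by (unfold betw; lra);
          apply uncrossing in Hb; [|apply IH; lia|lra];
          apply (Hn (dP2 j)); [apply in_Dl; exists (S (2*j))%nat; split; [lia|symmetry; apply dv_odd] | exact Hb] ]. }
    split. apply HCE; lia.
    intros He. subst e.
    pose proof (xs_be (k+q)). pose proof (xs_be (k'+q)).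
    destruct (Rlt_dec (xs (k+q)) be), (Rlt_dec (xs (k'+q)) be); try tauto; exfalso;
    (assert (Hb : betw (xs (k+q)) (xs (k'+q)) be) by (unfold betw; lra);
     apply uncrossing in Hb; [|apply HCE; lia|lra];
     apply (Hn (dP1 q)); [apply in_Dl; exists (2*q)%nat; split; [simpl; lia|symmetry; apply dv_even] | exact Hb]).
Qed.


Lemma div_phi : forall y, y / phi = y * (phi - 1).
Proof. intros. rewrite <- inv_phi. pose proof phi_pos. field. lra. Qed.

Lemma LA : forall y, 1 - y < 2 - phi + y / phi <-> be < y.
Proof.
  intros. rewrite div_phi. pose proof phi_sq. pose proof phi_pos.
  assert (E : 2 - phi + y * (phi - 1) - (1 - y) = (y - be) * phi) by (unfold be; lra).
  split; intro H1.
  - destruct (Rlt_dec be y); auto. assert (0 <= (be - y) * phi) by (apply Rmult_le_pos; lra). lra.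
  - assert (0 < (y - be) * phi) by (apply Rmult_lt_0_compat; lra). lra.
Qed.

Lemma LA' : forall y, 2 - phi + y / phi < 1 - y <-> y < be.
Proof.
  intros. rewrite div_phi. pose proof phi_sq. pose proof phi_pos.
  assert (E : 2 - phi + y * (phi - 1) - (1 - y) = (y - be) * phi) by (unfold be; lra).
  split; intro H1.
  - destruct (Rlt_dec y be); auto. assert (0 <= (y - be) * phi) by (apply Rmult_le_pos; lra). lra.
  - assert (0 < (be - y) * phi) by (apply Rmult_lt_0_compat; lra). lra.
Qed.

Lemma LB : forall y, 3 - 2*phi + y / phi < 1 - y <-> y < 2*be.
Proof.
  intros. rewrite div_phi. pose proof phi_sq. pose proof phi_pos.
  assert (E : (1 - y) - (3 - 2*phi + y * (phi - 1)) = (2*be - y) * phi) by (unfold be; lra).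
  split; intro H1.
  - destruct (Rlt_dec y (2*be)); auto. assert (0 <= (y - 2*be) * phi) by (apply Rmult_le_pos; lra). lra.
  - assert (0 < (2*be - y) * phi) by (apply Rmult_lt_0_compat; lra). lra.
Qed.

Lemma two_div_phi : forall k, 2 * INR k / phi = INR k * al + INR k.
Proof. intros. pose proof phi_pos. replace (2 * INR k / phi) with (2 * INR k * (1/phi)) by (field; lra).
  rewrite inv_phi. unfold al. ring. Qed.

Lemma fracY : forall k, frac_part (cY m0 + 2 * INR k / phi) = xs k.
Proof.
  intros. unfold cY, m0. simpl. rewrite two_div_phi. unfold xs.
  replace (1/2 + (INR k * al + INR k)) with ((1/2 + INR k * al) + IZR (Z.of_nat k)) by (rewrite <- INR_IZR_INZ; ring).
  apply frac_shift.
Qed.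

Lemma fracZ : forall k, frac_part (cZ m0 - 2 * INR k / phi) = 1 - xs k.
Proof.
  intros. unfold cZ, m0. simpl. rewrite two_div_phi. pose proof (xs_range k).
  pose proof (frac_decomp (1/2 + INR k * al)). fold (xs k) in H0.
  apply frac_unique with (- Int_part (1/2 + INR k * al) - Z.of_nat k)%Z. lra.
  rewrite minus_IZR, opp_IZR, <- INR_IZR_INZ. lra.
Qed.

Lemma piece_iff : forall y i, 0 < y < 1 -> y <> be -> y <> 2*be -> (Cv y = i <-> in_piece i y (1 - y)).
Proof.
  intros y i Hy H1 H2. pose proof (LA' y). pose proof (LA y). pose proof (LB y). pose proof be_bounds.
  assert (E1 : 4 - 2*phi = 2*be) by (unfold be; ring).
  assert (E2 : 2*phi - 3 = 1 - 2*be) by (unfold be; ring).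
  unfold Cv. destruct i; simpl; rewrite ?E1, ?E2;
  destruct (Rlt_dec y be); destruct (Rlt_dec y (2*be)); split; intro; try discriminate; try lra; auto.
  all: try tauto.
Qed.


Definition v0 (k : nat) : a7 := Cv (xs k).

Lemma v0_coding : coding_word m0 v0.
Proof.
  intros k i. unfold v0. rewrite fracY, fracZ. apply piece_iff; [apply xs_range|apply xs_be|apply xs_2be].
Qed.

Lemma v_eq : forall v, coding_word m0 v -> forall k, v k = v0 k.
Proof.
  intros v Hv k. apply (Hv k (v0 k)). rewrite fracY, fracZ. unfold v0.
  apply piece_iff; [apply xs_range|apply xs_be|apply xs_2be|reflexivity].
Qed.

Lemma Dl_nodup : forall L, NoDup (map dv (seq 0 L)).
Proof. intros. apply Injective_map_NoDup. intros a b; apply dv_inj. apply seq_NoDup. Qed.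

Lemma Dl_range : forall L d, In d (map dv (seq 0 L)) -> 0 < d < 1.
Proof. intros L d H. apply in_Dl in H. destruct H as [i [_ ->]]. apply dv_range. Qed.

Lemma Dl_avoid : forall L k d, In d (map dv (seq 0 L)) -> d <> xs k.
Proof. intros L k d H. apply in_Dl in H. destruct H as [i [_ ->]]. intro E. apply (xs_dv k i). auto. Qed.

Lemma cnt_surj : forall D (x0 : R) m, NoDup D -> (forall d, In d D -> 0 < d < 1) -> (m <= length D)%nat ->
  exists k : nat, cnt D (frac_part (x0 + INR k * al)) = m.
Proof.
  intros D x0 m Hnd Hr Hm.
  destruct (cell_ii (length D) D 0 1 eq_refl Hnd Hr ltac:(lra) m Hm) as [a [b [H1 [H2 H3]]]].
  destruct (density x0 a b) as [k Hk]; try lra. exists k. apply H3. auto.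
Qed.

Lemma v_complexity : forall n, complexity_is v0 n (2*n+1).
Proof.
  intros n. apply complexity_of_key with (key := fun k => cnt (map dv (seq 0 (2*n))) (xs k)).
  - intros i. pose proof (cnt_le (map dv (seq 0 (2*n))) (xs i)). rewrite length_map, length_seq in H. lia.
  - intros m Hm. destruct (cnt_surj (map dv (seq 0 (2*n))) (1/2) m) as [k Hk].
    apply Dl_nodup. apply Dl_range. rewrite length_map, length_seq. lia.
    exists k. exact Hk.
  - intros i i'. unfold v0.
    rewrite cell_iii by (intros d Hd; split; apply (Dl_avoid _ _ _ Hd)).
    pose proof (core i i' n false) as Hc. simpl b2 in Hc. rewrite Nat.add_0_r in Hc. rewrite <- Hc.
    split.
    + intros H. split. auto. discriminate.
    + intros [H _]. auto.
Qed.


Ltac dm x := pose proof (Nat.div_mod x 3 ltac:(lia)); pose proof (Nat.mod_upper_bound x 3 ltac:(lia)).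

Definition Phi3 (c : a7) : list abc :=
  match c with a_1 => la :: lc :: lb :: nil | a_2 => la :: lb :: lc :: nil | _ => la :: lb :: lb :: nil end.
Definition Fb (k r : nat) : abc := nth r (Phi3 (Cv (xs k))) la.
Definition Fw (i : nat) : abc := Fb (i / 3) (i mod 3).

Definition t1 (y : R) : R := if Rlt_dec y be then y * (phi + 1) else (1 - y) * phi.
Definition t2 (y : R) : R := if Rlt_dec y be then (1 - y) * phi
  else if Rlt_dec y (2*be) then y * (phi + 1) else (2 - y) * phi.
Definition tr (r : nat) (y : R) : R := match r with 0%nat => 0 | 1%nat => t1 y | _ => t2 y end.
Definition Tt (i : nat) : R := 2 * INR (i / 3) + tr (i mod 3) (xs (i / 3)).

Lemma divmod3 : forall k r, (r < 3)%nat -> ((3*k+r)/3 = k /\ (3*k+r) mod 3 = r)%nat.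
Proof. intros. dm (3*k+r)%nat. split; lia. Qed.

Lemma Fw_3 : forall k r, (r < 3)%nat -> Fw (3*k+r)%nat = Fb k r.
Proof. intros. unfold Fw. destruct (divmod3 k r H) as [-> ->]. auto. Qed.
Lemma Tt_3 : forall k r, (r < 3)%nat -> Tt (3*k+r)%nat = 2 * INR k + tr r (xs k).
Proof. intros. unfold Tt. destruct (divmod3 k r H) as [-> ->]. auto. Qed.

Lemma decomp3 : forall i, exists k r, (r < 3)%nat /\ i = (3*k+r)%nat.
Proof. intros. dm i. exists (i/3)%nat, (i mod 3)%nat. split; lia. Qed.

Lemma t_bounds : forall y, 0 < y < 1 -> y <> be -> y <> 2*be -> 0 < t1 y /\ t1 y < t2 y /\ t2 y < 2.
Proof.
  intros y Hy H1 H2. pose proof phi_sq. pose proof phi_bounds. pose proof be_bounds.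
  assert (I1 : phi - y * (2*phi+1) = (be - y) * (2*phi+1)) by (unfold be; lra).
  assert (I2 : 2 - y * (phi + 1) = (2*be - y) * (phi + 1)) by (unfold be; lra).
  assert (I3 : 2 - (2 - y) * phi = (y - 2*be) * phi) by (unfold be; lra).
  unfold t1, t2. destruct (Rlt_dec y be).
  - assert (0 < (be - y) * (2*phi+1)) by (apply Rmult_lt_0_compat; lra).
    assert (0 < y * (phi+1)) by (apply Rmult_lt_0_compat; lra).
    assert (0 < y * phi) by (apply Rmult_lt_0_compat; lra).
    split; [lra|split; lra].
  - destruct (Rlt_dec y (2*be)).
    + assert (0 < (y - be) * (2*phi+1)) by (apply Rmult_lt_0_compat; lra).
      assert (0 < (2*be - y) * (phi+1)) by (apply Rmult_lt_0_compat; lra).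
      assert (0 < (1 - y) * phi) by (apply Rmult_lt_0_compat; lra).
      split; [lra|split; lra].
    + assert (0 < (y - 2*be) * phi) by (apply Rmult_lt_0_compat; lra).
      assert (0 < (1 - y) * phi) by (apply Rmult_lt_0_compat; lra).
      split; [lra|split; lra].
Qed.

Lemma xs_ok : forall k, 0 < xs k < 1 /\ xs k <> be /\ xs k <> 2*be.
Proof. intros. split; [apply xs_range|split; [apply xs_be|apply xs_2be]]. Qed.

Lemma Tt_step : forall i, Tt i < Tt (S i).
Proof.
  intros i. destruct (decomp3 i) as [k [r [Hr Ei]]]; rewrite Ei; clear Ei.
  destruct (xs_ok k) as [A [B C]]. destruct (t_bounds _ A B C) as [T1 [T2 T3]].
  assert (Hr3 : (r = 0 \/ r = 1 \/ r = 2)%nat) by lia. destruct Hr3 as [ -> | [ -> | -> ]].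
  - replace (S (3*k+0)) with (3*k+1)%nat by lia. rewrite !Tt_3 by lia. simpl tr. lra.
  - replace (S (3*k+1)) with (3*k+2)%nat by lia. rewrite !Tt_3 by lia. simpl tr. lra.
  - replace (S (3*k+2)) with (3*(S k)+0)%nat by lia. rewrite !Tt_3 by lia. simpl tr. rewrite S_INR. lra.
Qed.

Lemma smono : forall (s : nat -> R), (forall i, s i < s (S i)) -> forall i j, (i < j)%nat -> s i < s j.
Proof.
  intros s H i j Hij. induction Hij. apply H. specialize (H m). lra.
Qed.

Lemma Tt_inj : forall i j, Tt i = Tt j -> i = j.
Proof.
  intros i j E. destruct (Nat.lt_trichotomy i j) as [h|[h|h]]; auto;
  apply (smono Tt Tt_step) in h; lra.
Qed.

Lemma Tt_0 : Tt 0 = 0.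
Proof. replace 0%nat with (3*0+0)%nat by lia. rewrite Tt_3 by lia. simpl. ring. Qed.

Lemma Tt_nonneg : forall i, 0 <= Tt i.
Proof. intros [|i]. rewrite Tt_0; lra. pose proof (smono Tt Tt_step 0 (S i) ltac:(lia)). rewrite Tt_0 in H. lra. Qed.

Lemma ray_X : forall t, coord la (on_ray m0 theta0 t) = t / 2.
Proof. intros. unfold coord, on_ray, cX, m0, theta0. cbn [fst snd]. field. Qed.
Lemma ray_Y : forall t, coord lb (on_ray m0 theta0 t) = 1/2 + t * (phi - 1).
Proof. intros. unfold coord, on_ray, cY, m0, theta0. cbn [fst snd]. rewrite inv_phi. ring. Qed.
Lemma ray_Z : forall t, coord lc (on_ray m0 theta0 t) = 1/2 + t * (2 - phi).
Proof. intros. unfold coord, on_ray, cZ, m0, theta0. cbn [fst snd]. rewrite inv_phi2. ring. Qed.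

Definition Ik (k : nat) : Z := Int_part (1/2 + INR k * al).

Lemma Y_dec : forall k s, 1/2 + (2 * INR k + s) * (phi - 1) = IZR (Ik k + Z.of_nat k) + xs k + s * (phi - 1).
Proof.
  intros. pose proof (frac_decomp (1/2 + INR k * al)). fold (xs k) (Ik k) in H.
  rewrite plus_IZR, <- INR_IZR_INZ. unfold al in H. lra.
Qed.

Lemma Zc_dec : forall k s, 1/2 + (2 * INR k + s) * (2 - phi) = IZR (1 + Z.of_nat k - Ik k) - xs k + s * (2 - phi).
Proof.
  intros. pose proof (frac_decomp (1/2 + INR k * al)). fold (xs k) (Ik k) in H.
  rewrite minus_IZR, plus_IZR, <- INR_IZR_INZ. unfold al in H. simpl. lra.
Qed.

Lemma phi_m1 : forall s, s * phi * (phi - 1) = s.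
Proof. intros. pose proof phi_sq. assert (s * (phi*phi) = s * (phi + 1)) by (rewrite H; auto). lra. Qed.
Lemma phi_p1 : forall s, s * (phi + 1) * (2 - phi) = s.
Proof. intros. pose proof phi_sq. assert (s * (phi*phi) = s * (phi + 1)) by (rewrite H; auto). lra. Qed.

Lemma Tt_hit : forall i, is_int (coord (Fw i) (on_ray m0 theta0 (Tt i))).
Proof.
  intros i. destruct (decomp3 i) as [k [r [Hr Ei]]]; rewrite Ei; clear Ei. rewrite Fw_3, Tt_3 by auto.
  unfold Fb. unfold Cv. pose proof (xs_range k).
  assert (Hr3 : (r = 0 \/ r = 1 \/ r = 2)%nat) by lia. destruct Hr3 as [ -> | [ -> | -> ]].
  - simpl tr. destruct (Rlt_dec (xs k) be); [|destruct (Rlt_dec (xs k) (2*be))]; simpl nth;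
    rewrite ray_X; exists (Z.of_nat k); rewrite <- INR_IZR_INZ; field.
  - simpl tr. unfold t1. destruct (Rlt_dec (xs k) be); [|destruct (Rlt_dec (xs k) (2*be))]; simpl nth.
    + rewrite ray_Z, Zc_dec. exists (1 + Z.of_nat k - Ik k)%Z. rewrite phi_p1. ring.
    + rewrite ray_Y, Y_dec. exists (Ik k + Z.of_nat k + 1)%Z. rewrite !plus_IZR. rewrite phi_m1. ring.
    + rewrite ray_Y, Y_dec. exists (Ik k + Z.of_nat k + 1)%Z. rewrite !plus_IZR. rewrite phi_m1. ring.
  - simpl tr. unfold t2. destruct (Rlt_dec (xs k) be); [|destruct (Rlt_dec (xs k) (2*be))]; simpl nth.
    + rewrite ray_Y, Y_dec. exists (Ik k + Z.of_nat k + 1)%Z. rewrite !plus_IZR. rewrite phi_m1. ring.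
    + rewrite ray_Z, Zc_dec. exists (1 + Z.of_nat k - Ik k)%Z. rewrite phi_p1. ring.
    + rewrite ray_Y, Y_dec. exists (Ik k + Z.of_nat k + 2)%Z. rewrite !plus_IZR. rewrite phi_m1. ring.
Qed.


Lemma solve_m1 : forall s c, s * (phi - 1) = c -> s = c * phi.
Proof. intros. rewrite <- H. pose proof (phi_m1 s). lra. Qed.
Lemma solve_2m : forall s c, s * (2 - phi) = c -> s = c * (phi + 1).
Proof. intros. rewrite <- H. pose proof (phi_p1 s). lra. Qed.

Lemma Z_between : forall (M : Z) a b, a < IZR M < b -> forall m0 m1 : Z, IZR m0 <= a -> b <= IZR m1 -> (m0 < M < m1)%Z.
Proof. intros. split; apply lt_IZR; lra. Qed.

Lemma hit_T : forall t l, 0 <= t -> is_int (coord l (on_ray m0 theta0 t)) -> exists i, Tt i = t /\ Fw i = l.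
Proof.
  intros t l Ht Hi.
  set (K := Int_part (t/2)).
  assert (HK : (0 <= K)%Z) by (apply Int_part_ge0; lra).
  set (k := Z.to_nat K).
  assert (Ek : INR k = IZR K) by (apply INR_Zto; auto).
  pose proof (base_Int_part (t/2)) as [B1 B2]. fold K in B1, B2.
  set (s := t - 2 * INR k).
  assert (Hs : 0 <= s < 2) by (unfold s; rewrite Ek; lra).
  assert (Ets : t = 2 * INR k + s) by (unfold s; ring). clearbody s k K.
  destruct (xs_ok k) as [Hy [Hb1 Hb2]]. set (y := xs k) in *.
  pose proof phi_bounds. pose proof be_bounds. pose proof phi_sq.
  destruct l.
  - rewrite ray_X in Hi. destruct Hi as [z Hz].
    assert (Hz0 : (0 <= z)%Z) by (apply le_IZR; lra).
    exists (3 * Z.to_nat z + 0)%nat. rewrite Tt_3, Fw_3 by lia. simpl tr. rewrite INR_Zto by auto.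
    split. lra. unfold Fb. destruct (Cv (xs (Z.to_nat z))); reflexivity.
  - rewrite ray_Y in Hi. destruct Hi as [n Hn]. rewrite Ets, Y_dec in Hn. fold y in Hn.
    set (M := (n - Ik k - Z.of_nat k)%Z).
    assert (EM : s * (phi - 1) = IZR M - y) by (unfold M; rewrite !minus_IZR; rewrite plus_IZR in Hn; lra).
    assert (Bs : 0 <= s * (phi - 1) < 2 * (phi - 1)) by (split; nra).
    destruct (Z_between M 0 3 ltac:(lra) 0 3 ltac:(simpl; lra) ltac:(simpl; lra)) as [M1 M2].
    assert (HM : M = 1%Z \/ M = 2%Z) by lia.
    apply solve_m1 in EM.
    destruct HM as [HM|HM]; rewrite HM in EM; simpl in EM.
    + destruct (Rlt_dec y be) as [h|h].
      * exists (3*k+2)%nat. rewrite Tt_3, Fw_3 by lia. simpl tr. unfold t2, Fb. fold y.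
        unfold Cv. destruct (Rlt_dec y be); [|lra]. simpl. split; [lra|auto].
      * exists (3*k+1)%nat. rewrite Tt_3, Fw_3 by lia. simpl tr. unfold t1, Fb. fold y.
        unfold Cv. destruct (Rlt_dec y be); [lra|]. destruct (Rlt_dec y (2*be)); simpl; split; auto; lra.
    + assert (h : 2 * be < y).
      { destruct (Rlt_dec (2*be) y); auto. assert (0 <= (2*be - y) * phi) by (apply Rmult_le_pos; lra).
        unfold be in *. nra. }
      exists (3*k+2)%nat. rewrite Tt_3, Fw_3 by lia. simpl tr. unfold t2, Fb. fold y.
      unfold Cv. destruct (Rlt_dec y be); [lra|]. destruct (Rlt_dec y (2*be)); [lra|]. simpl. split; [lra|auto].
  - rewrite ray_Z in Hi. destruct Hi as [n Hn]. rewrite Ets, Zc_dec in Hn. fold y in Hn.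
    set (M := (n - 1 - Z.of_nat k + Ik k)%Z).
    assert (EM : s * (2 - phi) = IZR M + y) by (unfold M; rewrite !plus_IZR, !minus_IZR; rewrite !minus_IZR, !plus_IZR in Hn; lra).
    assert (Bs : 0 <= s * (2 - phi) < 2 * (2 - phi)) by (split; nra).
    destruct (Z_between M (-1) 1 ltac:(unfold be in *; lra) (-1) 1 ltac:(simpl; lra) ltac:(simpl; lra)) as [M1 M2].
    assert (HM : M = 0%Z) by lia. rewrite HM in EM. simpl in EM.
    assert (h2 : y < 2*be) by (unfold be in *; lra).
    apply solve_2m in EM.
    destruct (Rlt_dec y be) as [h|h].
    + exists (3*k+1)%nat. rewrite Tt_3, Fw_3 by lia. simpl tr. unfold t1, Fb. fold y.
      unfold Cv. destruct (Rlt_dec y be); [|lra]. simpl. split; [lra|auto].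
    + exists (3*k+2)%nat. rewrite Tt_3, Fw_3 by lia. simpl tr. unfold t2, Fb. fold y.
      unfold Cv. destruct (Rlt_dec y be); [lra|]. destruct (Rlt_dec y (2*be)); [|lra]. simpl. split; [lra|auto].
Qed.

Lemma F_cutting : cutting_word theta0 m0 Fw.
Proof.
  exists Tt. split. apply Tt_nonneg. split. apply Tt_step. split. apply Tt_hit.
  intros t l Ht Hl. destruct (hit_T t l Ht Hl) as [i [E1 E2]]. exists i. auto.
Qed.

Lemma seq_eq : forall s s' : nat -> R, (forall i, s i < s (S i)) -> (forall i, s' i < s' (S i)) ->
  (forall n, exists m, s n = s' m) -> (forall n, exists m, s' n = s m) -> forall n, s n = s' n.
Proof.
  intros s s' Hs Hs' H1 H2 n. induction n as [n IH] using lt_wf_ind.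
  destruct (H1 n) as [m Hm]. destruct (H2 n) as [m' Hm'].
  assert (A : (n <= m)%nat).
  { destruct (Nat.lt_ge_cases m n); auto. exfalso. rewrite <- IH in Hm by auto.
    pose proof (smono s Hs m n H). lra. }
  assert (B : (n <= m')%nat).
  { destruct (Nat.lt_ge_cases m' n); auto. exfalso. rewrite IH in Hm' by auto.
    pose proof (smono s' Hs' m' n H). lra. }
  assert (s' n <= s' m) by (destruct (Nat.eq_dec n m); [subst; lra| left; apply smono; auto; lia]).
  assert (s n <= s m') by (destruct (Nat.eq_dec n m'); [subst; lra| left; apply smono; auto; lia]).
  lra.
Qed.

Lemma f_eq : forall f, cutting_word theta0 m0 f -> forall n, f n = Fw n.
Proof.
  intros f [tau [H0 [Hinc [Hhit Hall]]]].
  assert (Hpos : forall n, 0 <= tau n).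
  { intros [|n]. auto. pose proof (smono tau Hinc 0 (S n) ltac:(lia)). lra. }
  assert (Heq : forall n, tau n = Tt n).
  { apply seq_eq; auto. apply Tt_step.
    - intros n. destruct (hit_T (tau n) (f n) (Hpos n) (Hhit n)) as [i [E _]]. exists i. auto.
    - intros n. destruct (Hall (Tt n) (Fw n) (Tt_nonneg n) (Tt_hit n)) as [m [E _]]. exists m. auto. }
  intros n. destruct (hit_T (tau n) (f n) (Hpos n) (Hhit n)) as [i [E1 E2]].
  rewrite Heq in E1. apply Tt_inj in E1. subst. auto.
Qed.


Definition L0 (m : nat) : nat := (2*(m/3) + b2 (m mod 3 =? 2))%nat.
Definition D0 (m : nat) : list R := map dv (seq 0 (L0 m)).
Definition D1 (n : nat) : list R := al :: (al + be) :: D0 (n-2).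
Definition D2 (n : nat) : list R := (al + be) :: D0 (n-1).

Lemma Fb0 : forall k, Fb k 0 = la.
Proof. intros. unfold Fb. destruct (Cv (xs k)); reflexivity. Qed.
Lemma Fb1 : forall k, Fb k 1 = match Cv (xs k) with a_1 => lc | _ => lb end.
Proof. intros. unfold Fb. destruct (Cv (xs k)); reflexivity. Qed.
Lemma Fb2 : forall k, Fb k 2 = match Cv (xs k) with a_2 => lc | _ => lb end.
Proof. intros. unfold Fb. destruct (Cv (xs k)); reflexivity. Qed.

Lemma Cv_range : forall y, Cv y = a_1 \/ Cv y = a_2 \/ Cv y = a_4.
Proof. intros. unfold Cv. destruct (Rlt_dec y be); auto. destruct (Rlt_dec y (2*be)); auto. Qed.

Lemma Fb1_lt : forall k, Fb k 1 = if Rlt_dec (xs k) be then lc else lb.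
Proof. intros. rewrite Fb1. unfold Cv. destruct (Rlt_dec (xs k) be); auto. destruct (Rlt_dec (xs k) (2*be)); auto. Qed.

Lemma Fb12_eq : forall k k', (Fb k 1 = Fb k' 1 /\ Fb k 2 = Fb k' 2) <-> Cv (xs k) = Cv (xs k').
Proof.
  intros. rewrite !Fb1, !Fb2.
  destruct (Cv_range (xs k)) as [E|[E|E]]; destruct (Cv_range (xs k')) as [E'|[E'|E']]; rewrite E, E';
  split; intro H; (match type of H with _ /\ _ => destruct H as [H1 H2] | _ => idtac end); try discriminate; try (split; reflexivity); try reflexivity.
Qed.

Lemma Fw_add : forall k p, Fw (3*k+p)%nat = Fb (k + p/3) (p mod 3).
Proof. intros. unfold Fw. dm p. dm (3*k+p)%nat.
  replace ((3*k+p)/3)%nat with (k + p/3)%nat by lia. replace ((3*k+p) mod 3)%nat with (p mod 3)%nat by lia. auto. Qed.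

Lemma EqW0 : forall k k' n, (forall p, (p < n)%nat -> Fw (3*k+0+p)%nat = Fw (3*k'+0+p)%nat) <->
  (forall d, In d (D0 n) -> ~ betw (xs k) (xs k') d).
Proof.
  intros k k' n. unfold D0, L0. rewrite <- core.
  set (q := (n/3)%nat). set (e := (n mod 3 =? 2)%nat). dm n.
  split.
  - intros HW. split.
    + intros i Hi. apply Fb12_eq.
      pose proof (HW (3*i+1)%nat ltac:(lia)) as A1. pose proof (HW (3*i+2)%nat ltac:(lia)) as A2.
      rewrite <- !Nat.add_assoc, !Nat.add_0_l, !Fw_add in A1, A2.
      replace ((3*i+1)/3)%nat with i in A1 by (dm (3*i+1)%nat; lia).
      replace ((3*i+1) mod 3)%nat with 1%nat in A1 by (dm (3*i+1)%nat; lia).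
      replace ((3*i+2)/3)%nat with i in A2 by (dm (3*i+2)%nat; lia).
      replace ((3*i+2) mod 3)%nat with 2%nat in A2 by (dm (3*i+2)%nat; lia).
      split; auto.
    + intros He. unfold e in He. apply Nat.eqb_eq in He.
      pose proof (HW (3*q+1)%nat ltac:(unfold q; lia)) as A1.
      rewrite <- !Nat.add_assoc, !Nat.add_0_l, !Fw_add in A1.
      replace ((3*q+1)/3)%nat with q in A1 by (dm (3*q+1)%nat; lia).
      replace ((3*q+1) mod 3)%nat with 1%nat in A1 by (dm (3*q+1)%nat; lia).
      rewrite !Fb1_lt in A1. destruct (Rlt_dec (xs (k+q)) be), (Rlt_dec (xs (k'+q)) be); try discriminate; tauto.
  - intros [HC He] p Hp. rewrite <- !Nat.add_assoc, !Nat.add_0_l, !Fw_add. dm p.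
    destruct (Nat.lt_ge_cases (p/3) q) as [Hj|Hj].
    + specialize (HC _ Hj). 
      assert (p mod 3 = 0 \/ p mod 3 = 1 \/ p mod 3 = 2)%nat as Ho by lia.
      destruct Ho as [Ho|[Ho|Ho]]; rewrite Ho; [rewrite !Fb0; auto| |];
      apply Fb12_eq in HC; tauto.
    + assert (Hj' : (p/3 = q)%nat) by (unfold q in *; lia). rewrite Hj'.
      assert (Ho : (p mod 3 = 0 \/ (p mod 3 = 1 /\ n mod 3 = 2))%nat) by (unfold q in *; lia).
      destruct Ho as [Ho|[Ho Hn]]; rewrite Ho. rewrite !Fb0; auto.
      assert (Het : e = true) by (unfold e; apply Nat.eqb_eq; auto).
      specialize (He Het). rewrite !Fb1_lt.
      destruct (Rlt_dec (xs (k+q)) be), (Rlt_dec (xs (k'+q)) be); auto; tauto.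
Qed.

Lemma region : forall k,
  (Cv (xs k) = a_4 <-> xs (S k) < al) /\
  (Cv (xs k) = a_1 <-> al < xs (S k) < al + be) /\
  (Cv (xs k) = a_2 <-> al + be < xs (S k)).
Proof.
  intros k. rewrite xs_S. pose proof (xs_ok k) as [A [B C]]. pose proof al_be. pose proof be_bounds. pose proof al_bounds.
  unfold step, Cv. destruct (Rlt_dec (xs k) be); [|destruct (Rlt_dec (xs k) (2*be))];
  destruct (Rlt_dec (xs k) (2*be)); try lra;
  repeat split; intros; first [discriminate | lra | reflexivity | idtac].
Qed.

Lemma xsS_ok : forall k, 0 < xs (S k) < 1 /\ xs (S k) <> al /\ xs (S k) <> al + be.
Proof. intros. split; [apply xs_range|split; [apply xs_al|apply xs_albe]]. Qed.

Lemma R1 : forall k k', Cv (xs k) = Cv (xs k') <->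
  (~ betw (xs (S k)) (xs (S k')) al /\ ~ betw (xs (S k)) (xs (S k')) (al + be)).
Proof.
  intros k k'. pose proof (region k) as [P4 [P1 P2]]. pose proof (region k') as [Q4 [Q1 Q2]].
  pose proof (xsS_ok k) as [A [B C]]. pose proof (xsS_ok k') as [A' [B' C']]. pose proof be_bounds.
  unfold betw.
  destruct (Cv_range (xs k)) as [E|[E|E]]; destruct (Cv_range (xs k')) as [E'|[E'|E']]; rewrite E, E';
  rewrite E in P4, P1, P2; rewrite E' in Q4, Q1, Q2;
  split; intros Hx; try (destruct Hx as [Hx1 Hx2]); try discriminate; try reflexivity;
  try (pose proof (proj1 P4 eq_refl)); try (pose proof (proj1 P1 eq_refl)); try (pose proof (proj1 P2 eq_refl));
  try (pose proof (proj1 Q4 eq_refl)); try (pose proof (proj1 Q1 eq_refl)); try (pose proof (proj1 Q2 eq_refl));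
  try (split; lra); exfalso; lra.
Qed.

Lemma R2 : forall k k', Fb k 2 = Fb k' 2 <-> ~ betw (xs (S k)) (xs (S k')) (al + be).
Proof.
  intros k k'. rewrite !Fb2. pose proof (region k) as [_ [_ P2]]. pose proof (region k') as [_ [_ Q2]].
  pose proof (xsS_ok k) as [A [B C]]. pose proof (xsS_ok k') as [A' [B' C']].
  unfold betw.
  destruct (Cv (xs k)), (Cv (xs k')); split; intro Hx; try discriminate; try reflexivity;
  try (pose proof (proj1 P2 eq_refl)); try (pose proof (proj1 Q2 eq_refl));
  try (assert (~ al + be < xs (S k)) by (intro h; apply P2 in h; discriminate));
  try (assert (~ al + be < xs (S k')) by (intro h; apply Q2 in h; discriminate));
  try lra; exfalso; apply Hx; lra.
Qed.

Lemma Fw31 : forall k, Fw (3*k+1)%nat = Fb k 1.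
Proof. intros. apply Fw_3. lia. Qed.
Lemma Fw32 : forall k, Fw (3*k+2)%nat = Fb k 2.
Proof. intros. apply Fw_3. lia. Qed.

Lemma EqW1 : forall k k' n, (2 <= n)%nat ->
  ((forall p, (p < n)%nat -> Fw (3*k+1+p)%nat = Fw (3*k'+1+p)%nat) <->
  (forall d, In d (D1 n) -> ~ betw (xs (S k)) (xs (S k')) d)).
Proof.
  intros k k' n Hn.
  assert (Split : (forall p, (p < n)%nat -> Fw (3*k+1+p)%nat = Fw (3*k'+1+p)%nat) <->
     ((Fb k 1 = Fb k' 1 /\ Fb k 2 = Fb k' 2) /\
      (forall p, (p < n-2)%nat -> Fw (3*(S k)+0+p)%nat = Fw (3*(S k')+0+p)%nat))).
  { split.
    - intros H. split. split.
      + pose proof (H 0%nat ltac:(lia)). rewrite !Nat.add_0_r, !Fw31 in H0. auto.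
      + pose proof (H 1%nat ltac:(lia)). replace (3*k+1+1)%nat with (3*k+2)%nat in H0 by lia.
        replace (3*k'+1+1)%nat with (3*k'+2)%nat in H0 by lia. rewrite !Fw32 in H0. auto.
      + intros p Hp. pose proof (H (p+2)%nat ltac:(lia)).
        replace (3*k+1+(p+2))%nat with (3*(S k)+0+p)%nat in H0 by lia.
        replace (3*k'+1+(p+2))%nat with (3*(S k')+0+p)%nat in H0 by lia. auto.
    - intros [[H1 H2] H3] p Hp.
      destruct p as [|[|p]].
      + rewrite !Nat.add_0_r, !Fw31. auto.
      + replace (3*k+1+1)%nat with (3*k+2)%nat by lia.
        replace (3*k'+1+1)%nat with (3*k'+2)%nat by lia. rewrite !Fw32. auto.
      + replace (3*k+1+S (S p))%nat with (3*(S k)+0+p)%nat by lia.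
        replace (3*k'+1+S (S p))%nat with (3*(S k')+0+p)%nat by lia. apply H3. lia. }
  rewrite Split, Fb12_eq, R1, EqW0. unfold D1. simpl. split.
  - intros [[Ha Hb] Hc] d [<-|[<-|Hd]]; auto.
  - intros H. split. split; apply H; auto. intros d Hd; apply H; auto.
Qed.

Lemma EqW2 : forall k k' n, (1 <= n)%nat ->
  ((forall p, (p < n)%nat -> Fw (3*k+2+p)%nat = Fw (3*k'+2+p)%nat) <->
  (forall d, In d (D2 n) -> ~ betw (xs (S k)) (xs (S k')) d)).
Proof.
  intros k k' n Hn.
  assert (Split : (forall p, (p < n)%nat -> Fw (3*k+2+p)%nat = Fw (3*k'+2+p)%nat) <->
     (Fb k 2 = Fb k' 2 /\
      (forall p, (p < n-1)%nat -> Fw (3*(S k)+0+p)%nat = Fw (3*(S k')+0+p)%nat))).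
  { split.
    - intros H. split.
      + pose proof (H 0%nat ltac:(lia)). rewrite !Nat.add_0_r, !Fw32 in H0. auto.
      + intros p Hp. pose proof (H (p+1)%nat ltac:(lia)).
        replace (3*k+2+(p+1))%nat with (3*(S k)+0+p)%nat in H0 by lia.
        replace (3*k'+2+(p+1))%nat with (3*(S k')+0+p)%nat in H0 by lia. auto.
    - intros [H2 H3] p Hp.
      destruct p as [|p].
      + rewrite !Nat.add_0_r, !Fw32. auto.
      + replace (3*k+2+S p)%nat with (3*(S k)+0+p)%nat by lia.
        replace (3*k'+2+S p)%nat with (3*(S k')+0+p)%nat by lia. apply H3. lia. }
  rewrite Split, R2, EqW0. unfold D2. simpl. split.
  - intros [Hb Hc] d [<-|Hd]; auto.
  - intros H. split. apply H; auto. intros d Hd; apply H; auto.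
Qed.


Definition keyf (n i : nat) : nat :=
  match (i mod 3)%nat with
  | 0%nat => cnt (D0 n) (xs (i/3))
  | 1%nat => (S (L0 n) + cnt (D1 n) (xs (S (i/3))))%nat
  | _ => (S (L0 n) + (L0 (n-2) + 3) + cnt (D2 n) (xs (S (i/3))))%nat
  end.

Lemma keyf_0 : forall n k, keyf n (3*k+0)%nat = cnt (D0 n) (xs k).
Proof. intros. unfold keyf. destruct (divmod3 k 0 ltac:(lia)) as [-> ->]. auto. Qed.
Lemma keyf_1 : forall n k, keyf n (3*k+1)%nat = (S (L0 n) + cnt (D1 n) (xs (S k)))%nat.
Proof. intros. unfold keyf. destruct (divmod3 k 1 ltac:(lia)) as [-> ->]. auto. Qed.
Lemma keyf_2 : forall n k, keyf n (3*k+2)%nat = (S (L0 n) + (L0 (n-2) + 3) + cnt (D2 n) (xs (S k)))%nat.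
Proof. intros. unfold keyf. destruct (divmod3 k 2 ltac:(lia)) as [-> ->]. auto. Qed.

Lemma len_D0 : forall m, length (D0 m) = L0 m.
Proof. intros. unfold D0. rewrite length_map, length_seq. auto. Qed.
Lemma len_D1 : forall n, length (D1 n) = (L0 (n-2) + 2)%nat.
Proof. intros. unfold D1. simpl. rewrite len_D0. lia. Qed.
Lemma len_D2 : forall n, length (D2 n) = (L0 (n-1) + 1)%nat.
Proof. intros. unfold D2. simpl. rewrite len_D0. lia. Qed.

Lemma L0_sum : forall n, (2 <= n)%nat -> (L0 n + L0 (n-1) + L0 (n-2) = 2*n - 3)%nat.
Proof.
  intros n Hn. unfold L0, b2. dm n. dm (n-1)%nat. dm (n-2)%nat.
  destruct (Nat.eqb_spec (n mod 3) 2); destruct (Nat.eqb_spec ((n-1) mod 3) 2); destruct (Nat.eqb_spec ((n-2) mod 3) 2); lia.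
Qed.

Lemma D0_nodup : forall m, NoDup (D0 m).
Proof. intros. apply Dl_nodup. Qed.
Lemma D1_nodup : forall n, NoDup (D1 n).
Proof.
  intros. unfold D1. pose proof be_bounds. constructor.
  - intros [h|h]. lra. unfold D0 in h. apply in_Dl in h. destruct h as [i [_ h]]. apply (al_dv i). auto.
  - constructor. intros h. unfold D0 in h. apply in_Dl in h. destruct h as [i [_ h]]. apply (albe_dv i). auto.
    apply D0_nodup.
Qed.
Lemma D2_nodup : forall n, NoDup (D2 n).
Proof.
  intros. unfold D2. constructor.
  intros h. unfold D0 in h. apply in_Dl in h. destruct h as [i [_ h]]. apply (albe_dv i). auto.
  apply D0_nodup.
Qed.

Lemma D0_range : forall m d, In d (D0 m) -> 0 < d < 1.
Proof. intros. apply (Dl_range _ _ H). Qed.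
Lemma D1_range : forall n d, In d (D1 n) -> 0 < d < 1.
Proof. intros n d [<-|[<-|h]]. pose proof al_bounds; lra. pose proof al_bounds; pose proof be_bounds; lra. apply (D0_range _ _ h). Qed.
Lemma D2_range : forall n d, In d (D2 n) -> 0 < d < 1.
Proof. intros n d [<-|h]. pose proof al_bounds; pose proof be_bounds; lra. apply (D0_range _ _ h). Qed.

Lemma D0_avoid : forall m k d, In d (D0 m) -> d <> xs k.
Proof. intros. apply (Dl_avoid _ _ _ H). Qed.
Lemma D1_avoid : forall n k d, In d (D1 n) -> d <> xs k.
Proof. intros n k d [<-|[<-|h]]. intro E; apply (xs_al k); auto. intro E; apply (xs_albe k); auto. apply (D0_avoid _ _ _ h). Qed.
Lemma D2_avoid : forall n k d, In d (D2 n) -> d <> xs k.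
Proof. intros n k d [<-|h]. intro E; apply (xs_albe k); auto. apply (D0_avoid _ _ _ h). Qed.

Lemma xsS_frac : forall k, frac_part (1/2 + al + INR k * al) = xs (S k).
Proof. intros. unfold xs. rewrite S_INR. f_equal. ring. Qed.

Lemma Fb1_nla : forall k, Fb k 1 <> la.
Proof. intros. rewrite Fb1. destruct (Cv (xs k)); discriminate. Qed.
Lemma Fb2_nla : forall k, Fb k 2 <> la.
Proof. intros. rewrite Fb2. destruct (Cv (xs k)); discriminate. Qed.
Lemma Fw30 : forall k, Fw (3*k+0)%nat = la.
Proof. intros. rewrite Fw_3 by lia. apply Fb0. Qed.

Lemma F_complexity : forall n, (2 <= n)%nat -> complexity_is Fw n (2*n+3).
Proof.
  intros n Hn. pose proof (L0_sum n Hn) as HS.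
  apply complexity_of_key with (key := keyf n).
  - intros i. destruct (decomp3 i) as [k [r [Hr Ei]]]. rewrite Ei. clear Ei.
    assert (Hr3 : (r = 0 \/ r = 1 \/ r = 2)%nat) by lia. destruct Hr3 as [ -> | [ -> | -> ]].
    + rewrite keyf_0. pose proof (cnt_le (D0 n) (xs k)). rewrite len_D0 in H. lia.
    + rewrite keyf_1. pose proof (cnt_le (D1 n) (xs (S k))). rewrite len_D1 in H. lia.
    + rewrite keyf_2. pose proof (cnt_le (D2 n) (xs (S k))). rewrite len_D2 in H. lia.
  - intros m Hm. destruct (Nat.lt_ge_cases m (S (L0 n))) as [h0|h0].
    + destruct (cnt_surj (D0 n) (1/2) m (D0_nodup n) (D0_range n)) as [k Hk]. rewrite len_D0; lia.
      exists (3*k+0)%nat. rewrite keyf_0. exact Hk.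
    + destruct (Nat.lt_ge_cases m (S (L0 n) + (L0 (n-2) + 3))) as [h1|h1].
      * destruct (cnt_surj (D1 n) (1/2 + al) (m - S (L0 n)) (D1_nodup n) (D1_range n)) as [k Hk]. rewrite len_D1; lia.
        rewrite xsS_frac in Hk. exists (3*k+1)%nat. rewrite keyf_1. lia.
      * destruct (cnt_surj (D2 n) (1/2 + al) (m - (S (L0 n) + (L0 (n-2) + 3))) (D2_nodup n) (D2_range n)) as [k Hk]. rewrite len_D2; lia.
        rewrite xsS_frac in Hk. exists (3*k+2)%nat. rewrite keyf_2. lia.
  - intros i i'. destruct (decomp3 i) as [k [r [Hr Ei]]]. rewrite Ei. clear Ei.
    destruct (decomp3 i') as [k' [r' [Hr' Ei']]]. rewrite Ei'. clear Ei'.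
    pose proof (cnt_le (D0 n) (xs k)) as C0. pose proof (cnt_le (D0 n) (xs k')) as C0'.
    pose proof (cnt_le (D1 n) (xs (S k))) as C1. pose proof (cnt_le (D1 n) (xs (S k'))) as C1'.
    rewrite len_D0 in C0, C0'. rewrite len_D1 in C1, C1'.
    assert (Hr3 : (r = 0 \/ r = 1 \/ r = 2)%nat) by lia.
    assert (Hr3' : (r' = 0 \/ r' = 1 \/ r' = 2)%nat) by lia.
    destruct Hr3 as [ -> | [ -> | -> ]]; destruct Hr3' as [ -> | [ -> | -> ]];
      rewrite ?keyf_0, ?keyf_1, ?keyf_2.
    + rewrite EqW0. rewrite cell_iii. tauto. intros d Hd; split; apply (D0_avoid _ _ _ Hd).
    + split; [intro H; exfalso | lia]. specialize (H 0%nat ltac:(lia)). rewrite !Nat.add_0_r, Fw31 in H.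
      rewrite <- (Nat.add_0_r (3*k)) in H. rewrite Fw30 in H. apply (Fb1_nla k'). auto.
    + split; [intro H; exfalso | lia]. specialize (H 0%nat ltac:(lia)). rewrite !Nat.add_0_r, Fw32 in H.
      rewrite <- (Nat.add_0_r (3*k)) in H. rewrite Fw30 in H. apply (Fb2_nla k'). auto.
    + split; [intro H; exfalso | lia]. specialize (H 0%nat ltac:(lia)). rewrite !Nat.add_0_r, Fw31 in H.
      rewrite <- (Nat.add_0_r (3*k')) in H. rewrite Fw30 in H. apply (Fb1_nla k). auto.
    + rewrite EqW1 by auto. rewrite <- cell_iii. lia. intros d Hd; split; apply (D1_avoid _ _ _ Hd).
    + split; [intro H; exfalso | lia]. specialize (H 1%nat ltac:(lia)).
      replace (3*k+1+1)%nat with (3*k+2)%nat in H by lia. replace (3*k'+2+1)%nat with (3*(S k')+0)%nat in H by lia.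
      rewrite Fw32, Fw30 in H. apply (Fb2_nla k). auto.
    + split; [intro H; exfalso | lia]. specialize (H 0%nat ltac:(lia)). rewrite !Nat.add_0_r, Fw32 in H.
      rewrite <- (Nat.add_0_r (3*k')) in H. rewrite Fw30 in H. apply (Fb2_nla k). auto.
    + split; [intro H; exfalso | lia]. specialize (H 1%nat ltac:(lia)).
      replace (3*k'+1+1)%nat with (3*k'+2)%nat in H by lia. replace (3*k+2+1)%nat with (3*(S k)+0)%nat in H by lia.
      rewrite Fw32, Fw30 in H. apply (Fb2_nla k'). auto.
    + rewrite EqW2 by lia. rewrite <- cell_iii. lia. intros d Hd; split; apply (D2_avoid _ _ _ Hd).
Qed.


Theorem proposition3 :
  ((exists v : nat -> a7, coding_word m0 v) /\
   (forall v : nat -> a7, coding_word m0 v ->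
      forall n : nat, complexity_is v n (2 * n + 1))) /\
  ((exists f : nat -> abc, cutting_word theta0 m0 f) /\
   (forall f : nat -> abc, cutting_word theta0 m0 f ->
      forall n : nat, (2 <= n)%nat -> complexity_is f n (2 * n + 3))).
Proof.
  split; split.
  - exists v0. apply v0_coding.
  - intros v Hv n. replace v with v0 by (extensionality k; symmetry; apply v_eq; auto). apply v_complexity.
  - exists Fw. apply F_cutting.
  - intros f Hf n Hn. replace f with Fw by (extensionality k; symmetry; apply f_eq; auto). apply F_complexity; auto.
Qed.
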